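(* Let $n\ge 0$ and let $v(t)=\sum_{i=0}^{n+1}\mathbf{v}_iB^{n+1}_i(t)$ and $w(t)=\sum_{i=0}^{n+1}\mathbf{w}_iB^{n+1}_i(t)$ be real polynomials of degree at most $n+1$. Define the $(n+1)\times(n+1)$ Toeplitz matrices $T^{v,n}_{ij}=\binom{n+1}{j-i}\mathbf{v}_{j-i}$, $T^{w,n}_{ij}=\binom{n+1}{j-i}\mathbf{w}_{j-i}$, the Hankel matrices $H^{v,n}_{ij}=\binom{n+1}{i+j+1}\mathbf{v}_{i+j+1}$, $H^{w,n}_{ij}=\binom{n+1}{i+j+1}\mathbf{w}_{i+j+1}$ ($0\le i,j\le n$), and $\Delta^n=\mathrm{diag}\big(\binom{n}{j}\big)_{j=0}^n$. Then $$\mathrm{Bez}(v,w)=(\Delta^n)^{-1}\big[H^{v,n}T^{w,n}-H^{w,n}T^{v,n}\big](\Delta^n)^{-1}.$$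
   Context: Bernstein polynomials of degree $n$: $B^n_j(x)=\binom{n}{j}x^j(1-x)^{n-j}$. The Bernstein–Bézout matrix $\mathrm{Bez}(v,w)$ of two polynomials $v,w$ of degree at most $n+1$ is the unique $(n+1)\times(n+1)$ matrix $(b_{ij})_{i,j=0}^n$ satisfying $\frac{v(s)w(t)-v(t)w(s)}{s-t}=\sum_{i,j=0}^n b_{ij}B^n_i(s)B^n_j(t)$. Convention: $\binom{a}{b}=0$ if $b<0$ or $b>a$ (so entries with out-of-range indices vanish, regardless of the undefined coefficient they multiply). *)

(* Defs.v *)
From mathcomp Require Import all_boot all_order all_algebra.
Unset Printing Implicit Defensive.
Import Order.TTheory GRing.Theory Num.Theory.
Local Open Scope ring_scope.

Definition bern {R : pzRingType} (n j : nat) (x : R) : R :=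
  'C(n, j)%:R * x ^+ j * (1 - x) ^+ (n - j).

Definition bpoly {R : pzRingType} (m : nat) (c : nat -> R) (t : R) : R :=
  \sum_(i < m.+1) c i * bern m i t.

(* M is the Bernstein-Bezout matrix of v and w (of degree <= n+1):
   (v(s)w(t) - v(t)w(s))/(s-t) = sum_ij M_ij B^n_i(s) B^n_j(t), stated
   without division (multiplied by s - t) for all s, t. *)
Definition is_BernBez {R : comPzRingType} (n : nat) (v w : R -> R)
  (M : 'M[R]_n.+1) : Prop :=
  forall s t : R,
    (s - t) * (\sum_(i < n.+1) \sum_(j < n.+1) M i j * bern n i s * bern n j t)
    = v s * w t - v t * w s.

Definition toepB {R : pzRingType} (n : nat) (c : nat -> R) : 'M[R]_n.+1 :=
  \matrix_(i < n.+1, j < n.+1)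
    (if (i <= j)%N then 'C(n.+1, j - i)%:R * c (j - i)%N else 0).

Definition hankB {R : pzRingType} (n : nat) (c : nat -> R) : 'M[R]_n.+1 :=
  \matrix_(i < n.+1, j < n.+1) ('C(n.+1, i + j + 1)%:R * c (i + j + 1)%N).

Definition deltaB {R : pzRingType} (n : nat) : 'M[R]_n.+1 :=
  diag_mx (\row_(j < n.+1) ('C(n, j)%:R : R)).

(* Main.v *)
Require Import Defs.
From mathcomp Require Import all_boot all_order all_algebra.
From mathcomp Require Import ring zify.
Import GRing.Theory Num.Theory.
Local Open Scope ring_scope.

Definition mon {R : pzRingType} (m i : nat) (x : R) : R := x ^+ i * (1 - x) ^+ (m - i).
Definition Vb {R : pzRingType} (N : nat) (c : nat -> R) (p : nat) : R := 'C(N, p)%:R * c p.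

Section S.
Variable R : realFieldType.

Lemma step (n i j : nat) (s t : R) : (i <= n)%N -> (j <= n)%N ->
  (s - t) * (mon n i s * mon n j t) =
  mon n.+1 i.+1 s * mon n.+1 j t - mon n.+1 i s * mon n.+1 j.+1 t.
Proof.
move=> hi hj; rewrite /mon !subSS (subSn hi) (subSn hj) !exprS; ring.
Qed.

Lemma sum_delta (M c : nat) (F : nat -> R) :
  \sum_(0 <= j < M) (if j == c then F j else 0) = if (c < M)%N then F c else 0.
Proof.
elim: M => [|M IH]; first by rewrite big_nil.
rewrite big_nat_recr //= IH; case: (ltngtP c M) => h.
- by rewrite ltnS ltnW // addr0.
- by rewrite ltnS leqNgt h addr0.
- by rewrite h add0r ltnSn.
Qed.

Lemma Vb_delta (N c : nat) (V : nat -> R) (X : R) :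
  \sum_(0 <= p < N.+1) (if p == c then Vb N V p * X else 0) = Vb N V c * X.
Proof.
rewrite sum_delta; case: ltnP => // h.
by rewrite /Vb bin_small // mul0r mul0r.
Qed.

Lemma bpolyE (m : nat) (c : nat -> R) (t : R) :
  bpoly m c t = \sum_(0 <= p < m.+1) Vb m c p * mon m p t.
Proof.
rewrite /bpoly big_mkord; apply: eq_bigr => i _.
by rewrite /Vb /bern /mon; ring.
Qed.

Lemma swap4 (F : nat -> nat -> nat -> nat -> R) a b c d :
  \sum_(0<=i<a)\sum_(0<=j<b)\sum_(0<=p<c)\sum_(0<=q<d) F i j p q =
  \sum_(0<=p<c)\sum_(0<=q<d)\sum_(0<=i<a)\sum_(0<=j<b) F i j p q.
Proof.
under eq_bigr => i _ do rewrite exchange_big_nat.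
under eq_bigr => i _ do under eq_bigr => p _ do rewrite exchange_big_nat.
rewrite exchange_big_nat.
by under eq_bigr => p _ do rewrite exchange_big_nat.
Qed.

Lemma sum_cut (a b : nat) (F : nat -> R) : (b <= a)%N ->
  \sum_(0 <= k < a) (if (k < b)%N then F k else 0) = \sum_(0 <= k < b) F k.
Proof. by move=> h; rewrite (big_nat_widen 0 b a xpredT F h) [RHS]big_mkcond. Qed.

Definition E (N : nat) (V W : nat -> R) (i j : nat) : R :=
  \sum_(0 <= p < N.+1) \sum_(0 <= q < N.+1)
     (if (i < p)%N && (i + j + 1 == p + q)%N then V p * W q else 0).

Lemma inner (n i j : nat) (V W : nat -> R) : (j <= n)%N ->
  \sum_(k < n.+1) (Vb n.+1 V (i + k + 1) * (if (k <= j)%N then Vb n.+1 W (j - k) else 0))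
  = E n.+1 (Vb n.+1 V) (Vb n.+1 W) i j.
Proof.
move=> hj; rewrite /E exchange_big_nat /=.
have -> : \sum_(0 <= q < n.+2) \sum_(0 <= p < n.+2)
   (if (i < p)%N && (i + j + 1 == p + q)%N then Vb n.+1 V p * Vb n.+1 W q else 0)
 = \sum_(0 <= q < n.+2) (if (q <= j)%N then Vb n.+1 V (i + j + 1 - q) * Vb n.+1 W q else 0).
  apply: eq_bigr => q _.
  case: (leqP q j) => hq.
    rewrite -(Vb_delta n.+1 (i + j + 1 - q)); apply: eq_bigr => p _.
    have -> : ((i < p)%N && (i + j + 1 == p + q)%N) = (p == i + j + 1 - q)%N.
      apply/andP/eqP; [case=> _ /eqP; lia| move=> ->; split; [lia| apply/eqP; lia]].
    by [].
  apply: big1 => p _; case: andP => // [[h1 /eqP h2]]; lia.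
have hj2 : (j.+1 <= n.+2)%N by lia.
have hj1 : (j.+1 <= n.+1)%N by lia.
transitivity (\sum_(0 <= q < j.+1) Vb n.+1 V (i + j + 1 - q) * Vb n.+1 W q); last first.
  by rewrite -(sum_cut _ _ _ hj2).
rewrite -(big_mkord xpredT (fun k => Vb n.+1 V (i + k + 1) * (if (k <= j)%N then Vb n.+1 W (j - k) else 0))).
transitivity (\sum_(0 <= k < n.+1) (if (k < j.+1)%N then Vb n.+1 V (i + k + 1) * Vb n.+1 W (j - k) else 0)).
  by apply: eq_bigr => k _; rewrite ltnS; case: ifP; rewrite ?mulr0.
rewrite (sum_cut _ _ _ hj1) big_nat_rev /=; apply: eq_big_nat => k hk.
have -> : (i + (0 + j.+1 - k.+1) + 1 = i + j + 1 - k)%N by lia.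
by have -> : (j - (0 + j.+1 - k.+1) = k)%N by lia.
Qed.

Lemma boolt (i j p q : nat) : (i < p)%N -> ((i + j + 1 == p + q)%N = (j == (p+q).-1 - i)%N).
Proof. move=> h; apply/eqP/eqP; lia. Qed.

Definition S (n p q : nat) (s t : R) : R :=
  \sum_(0 <= i < n.+1) \sum_(0 <= j < n.+1)
    (if (i < p)%N && (i + j + 1 == p + q)%N then mon n i s * mon n j t else 0).

Definition Zf (n m i : nat) (s t : R) : R :=
  if ((m.-1 - i) < n.+1)%N then mon n i s * mon n (m.-1 - i) t else 0.

Lemma Sform n p q s t : S n p q s t = \sum_(0 <= i < n.+1) (if (i < p)%N then Zf n (p + q) i s t else 0).
Proof.
apply: eq_bigr => i _; case: ifP => h /=.
  under eq_bigr => j _ do rewrite (boolt i j p q h).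
  by rewrite sum_delta.
by apply: big1.
Qed.

Lemma sum_range (a b c : nat) (F : nat -> R) : (b <= c)%N ->
  \sum_(0 <= i < c) (if (i < b)%N && (a <= i)%N then F i else 0) = \sum_(a <= i < b) F i.
Proof.
move=> h; rewrite (big_nat_widen a b c xpredT F h) (big_nat_widenl a 0 c) //.
rewrite [RHS]big_mkcond; apply: eq_bigr => i _ /=; by rewrite andbC.
Qed.

Lemma pair_le n p q s t : (p <= q)%N -> (q <= n.+1)%N ->
  (s - t) * (S n p q s t - S n q p s t) =
  mon n.+1 p s * mon n.+1 q t - mon n.+1 q s * mon n.+1 p t.
Proof.
move=> hpq hq; rewrite !Sform (addnC q p) -sumrB.
have e : forall i, (if (i < p)%N then Zf n (p + q) i s t else 0) - (if (i < q)%N then Zf n (p + q) i s t else 0)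
   = - (if (i < q)%N && (p <= i)%N then Zf n (p + q) i s t else 0).
  move=> i; case: (ltnP i p) => h1.
    have h2 : (i < q)%N by lia.
    by rewrite h2 /= subrr oppr0.
  by rewrite andbT; case: ifP; rewrite sub0r.
under eq_bigr do rewrite e.
rewrite sumrN sum_range // mulrN mulr_sumr.
rewrite (telescope_sumr_eq (fun i => mon n.+1 i s * mon n.+1 (p + q - i) t)) //.
  by rewrite addnK addKn opprB.
move=> i hi; rewrite /Zf ifT; last by lia.
rewrite step; [|lia|lia].
have -> : ((p + q).-1 - i = p + q - i.+1)%N by lia.
by have -> : ((p + q - i.+1).+1 = p + q - i)%N by lia.
Qed.

Lemma pair n p q s t : (p <= n.+1)%N -> (q <= n.+1)%N ->
  (s - t) * (S n p q s t - S n q p s t) =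
  mon n.+1 p s * mon n.+1 q t - mon n.+1 q s * mon n.+1 p t.
Proof.
move=> hp hq; case: (leqP p q) => h; first exact: pair_le.
by rewrite -[S n p q s t - _]opprB mulrN pair_le ?opprB // ltnW.
Qed.


Lemma bern_mon (m i : nat) (x : R) : bern m i x = 'C(m, i)%:R * mon m i x.
Proof. by rewrite /bern /mon mulrA. Qed.

Lemma sum2_mkord (F : nat -> nat -> R) a b :
  \sum_(i < a) \sum_(j < b) F i j = \sum_(0 <= i < a) \sum_(0 <= j < b) F i j.
Proof. by rewrite big_mkord; apply: eq_bigr => i _; rewrite big_mkord. Qed.

Lemma ESum n (V W : nat -> R) s t :
  \sum_(0 <= i < n.+1) \sum_(0 <= j < n.+1) E n.+1 V W i j * (mon n i s * mon n j t)
  = \sum_(0 <= p < n.+2) \sum_(0 <= q < n.+2) V p * W q * S n p q s t.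
Proof.
rewrite /E /S.
under eq_bigr => i _ do under eq_bigr => j _ do (rewrite mulr_suml; under eq_bigr => p _ do rewrite mulr_suml).
rewrite swap4; apply: eq_bigr => p _; apply: eq_bigr => q _.
rewrite mulr_sumr; apply: eq_bigr => i _; rewrite mulr_sumr; apply: eq_bigr => j _.
by case: ifP => _; rewrite ?mulr0 ?mul0r // mulrA.
Qed.

End S.
Arguments E {R}. Arguments S {R}. Arguments sum2_mkord {R}.

Theorem corollary2p6 (R : realFieldType) (n : nat) (vc wc : nat -> R) :
  is_BernBez n (bpoly n.+1 vc) (bpoly n.+1 wc)
    (invmx (deltaB n)
       *m (hankB n vc *m toepB n wc - hankB n wc *m toepB n vc)
       *m invmx (deltaB n)).
Proof.
have hC : forall j : 'I_n.+1, ('C(n, j)%:R : R) != 0.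
  by move=> j; rewrite pnatr_eq0 -lt0n bin_gt0 -ltnS.
set Dd := diag_mx (\row_(j < n.+1) ('C(n, j)%:R : R)^-1).
have Dinv : invmx (deltaB n) = Dd.
  have H : deltaB n *m Dd = 1%:M.
    rewrite /deltaB /Dd mulmx_diag -diag_const_mx; congr diag_mx.
    by apply/rowP => j; rewrite !mxE mulfV.
  have [U _] := mulmx1_unit H.
  by rewrite -[RHS](mulKmx U) H mulmx1.
set G := hankB n vc *m toepB n wc - hankB n wc *m toepB n vc.
rewrite /is_BernBez => s t.
have Mij : forall i j : 'I_n.+1,
   (invmx (deltaB n) *m G *m invmx (deltaB n)) i j * bern n i s * bern n j t = G i j * (mon n i s * mon n j t).
  move=> i j; rewrite Dinv mul_mx_diag mxE mul_diag_mx !mxE !bern_mon.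
  have h1 := hC i; have h2 := hC j.
  by field; rewrite h1 h2.
have Gij : forall i j : 'I_n.+1,
   G i j = E n.+1 (Vb n.+1 vc) (Vb n.+1 wc) i j - E n.+1 (Vb n.+1 wc) (Vb n.+1 vc) i j.
  move=> i j; rewrite /G !mxE.
  have hj : (j <= n)%N by rewrite -ltnS.
  by congr (_ - _); rewrite -inner //; apply: eq_bigr => k _; rewrite !mxE.
under eq_bigr => i _ do under eq_bigr => j _ do rewrite Mij Gij.
rewrite (sum2_mkord (fun i j => (E n.+1 (Vb n.+1 vc) (Vb n.+1 wc) i j - E n.+1 (Vb n.+1 wc) (Vb n.+1 vc) i j) * (mon n i s * mon n j t))).
under eq_bigr => i _ do under eq_bigr => j _ do rewrite mulrBl.
under eq_bigr => i _ do rewrite sumrB.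
rewrite sumrB !ESum.
rewrite [X in _ * (_ - X)]exchange_big_nat /=.
transitivity (\sum_(0 <= p < n.+2) \sum_(0 <= q < n.+2) Vb n.+1 vc p * Vb n.+1 wc q *
   (mon n.+1 p s * mon n.+1 q t - mon n.+1 q s * mon n.+1 p t)).
  rewrite -sumrB mulr_sumr; apply: eq_big_nat => p hp.
  rewrite -sumrB mulr_sumr; apply: eq_big_nat => q hq.
  rewrite -pair; [ring | lia | lia].
rewrite !bpolyE !mulr_suml -sumrB; apply: eq_bigr => p _.
rewrite !mulr_sumr -sumrB; apply: eq_bigr => q _.
ring.
Qed.
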